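(* For every polytope $P$ and every instance $S=((s_1,d_1),\dots,(s_n,d_n))$, letting $m=\max_{t\le T}|\{i:s_i\le t\le d_i\}|$, we have $OPT_A(S;P)=Disp(m;P)$.
   Context: Distances are Euclidean; $\partial P$ is the boundary of $P$. $Disp(n;P)=\max_{X_1,\dots,X_n\in P}\min\{dis(X_i,\partial P),dis(X_i,X_j):i\ne j\}$. An instance has $s_i<d_i$, $0=s_1\le\dots\le s_n$; point $i$ is present at time $t$ iff $s_i\le t\le d_i$; $T=\max_id_i$. For $X\in P^n$, $d_{min}(t;X)=\min\{dis(X_i,\partial P),dis(X_i,X_j)\}$ over present points $i\ne j$ at time $t$, and $OPT_A(S;P)=\max_X\min_{t\le T}d_{min}(t;X)$. *)

(* Defs.v *)
From HB Require Import structures.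
From mathcomp Require Import all_boot all_order all_algebra.
From mathcomp Require Import all_classical all_reals.
Set Implicit Arguments. Unset Strict Implicit. Unset Printing Implicit Defensive.
Import Order.TTheory GRing.Theory Num.Theory.
Local Open Scope ring_scope.
Local Open Scope classical_set_scope.

Section Dispersion.
Variables (R : realType) (dim : nat).
Notation pt := 'rV[R]_dim.

Definition edist (x y : pt) : R := Num.sqrt (\sum_(k < dim) (x 0 k - y 0 k) ^+ 2).

Definition polytope (P : set pt) : Prop :=
  exists (k : nat) (v : 'I_k.+1 -> pt),
    P = [set x | exists w : 'I_k.+1 -> R,
           (forall i, 0 <= w i) /\ \sum_i w i = 1 /\ x = \sum_i w i *: v i].

Definition boundary (P : set pt) : set pt :=
  [set x | forall e : R, 0 < e ->
     (exists y, P y /\ edist x y < e) /\ (exists y, ~ P y /\ edist x y < e)].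

Definition dist_set (x : pt) (A : set pt) : R := inf [set edist x y | y in A].

(* Disp(n;P) = max over X in P^n of min{dis(X_i,dP), dis(X_i,X_j) : i <> j},
   written as the supremum of the values v below that min. *)
Definition Disp (n : nat) (P : set pt) : R :=
  sup [set v : R | exists X : 'I_n -> pt, (forall i, P (X i)) /\
        forall i, v <= dist_set (X i) (boundary P) /\
                  forall j, j != i -> v <= edist (X i) (X j)].

Definition present (n : nat) (s d : 'I_n -> R) (t : R) (i : 'I_n) : bool :=
  (s i <= t) && (t <= d i).

Definition horizon (n : nat) (d : 'I_n -> R) : R := \big[Num.max/0]_(i < n) d i.

Definition npresent (n : nat) (s d : 'I_n -> R) (t : R) : nat :=
  #|[set i | present s d t i]|.

(* OPT_A(S;P) = max_X min_{t <= T} d_min(t;X), written as the supremum of the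
   values v below d_min(t;X) for every t <= T. *)
Definition OPT_A (n : nat) (s d : 'I_n -> R) (P : set pt) : R :=
  sup [set v : R | exists X : 'I_n -> pt, (forall i, P (X i)) /\
        forall t, t <= horizon d ->
        forall i, present s d t i ->
          v <= dist_set (X i) (boundary P) /\
          forall j, j != i -> present s d t j -> v <= edist (X i) (X j)].

End Dispersion.

(* Main.v *)
Require Import Defs.
From HB Require Import structures.
From mathcomp Require Import all_boot all_order all_algebra.
From mathcomp Require Import all_classical all_reals.
Import Order.TTheory GRing.Theory Num.Theory.
Local Open Scope ring_scope.

Lemma horizon_ge (R : realType) n (d : 'I_n -> R) i : d i <= horizon d.
Proof. rewrite /horizon; exact: le_bigmax. Qed.
Arguments horizon_ge {R n} d i.

Lemma coloring (R : realType) (n m : nat) (s d : 'I_n -> R) (m0 : (0 < m)%N)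
  (hsort : forall i j : 'I_n, (i <= j)%N -> s i <= s j)
  (hsd : forall i, s i <= d i)
  (hmax : forall k : 'I_n, (#|[set i | ((s i <= s k) && (s k <= d i))%R]| <= m)%N) :
  forall k, (k <= n)%N -> exists c : 'I_n -> 'I_m,
    forall i j : 'I_n, (i < j)%N -> (j < k)%N -> s j <= d i -> c i != c j.
Proof.
elim=> [_|k IH Hk].
  by exists (fun _ => Ordinal m0).
have [c Hc] := IH (ltnW Hk).
pose kk := Ordinal Hk.
pose A := [set i : 'I_n | (i < k)%N && (s kk <= d i)%R].
pose C := [set c i | i in A].
have HA : (#|A| < m)%N.
  apply: leq_trans (hmax kk); apply: proper_card; apply/properP; split.
    apply/fintype.subsetP => i; rewrite !inE => /andP[ik ->]; rewrite andbT.
    by apply: hsort; apply: ltnW.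
  by exists kk; rewrite !inE ?ltnn // lexx hsd.
have HC : (#|C| < m)%N by apply: leq_ltn_trans (leq_imset_card _ _) HA.
case: (pickP [pred x | x \notin C]) => [x /= Hx | H].
  exists (fun i => if i == kk then x else c i) => i j ij jk sd.
  have ik : i != kk.
    apply/negP => /eqP ik; move: jk ij; rewrite ltnS ik /= => jk ij.
    by have := leq_trans ij jk; rewrite ltnn.
  rewrite (negbTE ik).
  case: (eqVneq j kk) => [jkk|jne].
    apply/negP => /eqP ci; move: Hx; rewrite -ci; apply/negP/negPn.
    apply: imset_f; rewrite inE -jkk sd andbT.
    by move: ij; rewrite jkk.
  apply: Hc => //.
  rewrite ltn_neqAle -ltnS jk andbT.
  by apply: contra jne => /eqP jv; apply/eqP/val_inj.
exfalso.
have : C = [set: 'I_m] by apply/setP => x; rewrite inE; have := H x; rewrite /= => /negbFE.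
move=> CT; move: HC; rewrite CT cardsT card_ord ltnn //.
Qed.
Local Open Scope classical_set_scope.

Theorem claim2 (R : realType) (dim : nat) (P : set 'rV[R]_dim)
  (hP : polytope P)
  (n : nat) (hn : (0 < n)%N) (s d : 'I_n -> R)
  (hsd : forall i, s i < d i)
  (hs0 : forall i : 'I_n, val i = 0%N -> s i = 0)
  (hsort : forall i j : 'I_n, (i <= j)%N -> s i <= s j)
  (m : nat)
  (hm_att : exists t, t <= horizon d /\ npresent s d t = m)
  (hm_max : forall t, t <= horizon d -> (npresent s d t <= m)%N) :
  OPT_A s d P = Disp m P.
Proof.
have hsd' : forall i, s i <= d i by move=> i; exact: ltW.
have cardE : forall t, npresent s d t = #|finset (present s d t)|.
  move=> t; rewrite /npresent; apply: eq_card => i; rewrite !inE /=.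
  by apply/idP/idP; rewrite in_setE.
have m0 : (0 < m)%N.
  have h0 : 0 <= horizon d.
    have := horizon_ge d (Ordinal hn); apply: le_trans.
    by rewrite -(hs0 (Ordinal hn)) //.
  apply: leq_trans (hm_max 0 h0); rewrite cardE; apply/card_gt0P.
  by exists (Ordinal hn); rewrite inE /present hs0 // lexx /= -(hs0 (Ordinal hn)) //.
have [c Hc] := @coloring R n m s d m0 hsort hsd'
  (fun k => (leq_trans (eq_leq (esym (cardE (s k))))
     (hm_max (s k) (le_trans (hsd' k) (horizon_ge d k))))) n (leqnn n).
have Hc' : forall t i j, i != j -> present s d t i -> present s d t j -> c j != c i.
  move=> t i j nij /andP[si di] /andP[sj dj].
  case: (ltngtP (val i) (val j)) => ij.
  - by rewrite eq_sym; exact: (Hc i j ij (ltn_ord j) (le_trans sj di)).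
  - exact: (Hc j i ij (ltn_ord i) (le_trans si dj)).
  - by move: nij; rewrite (val_inj ij) eqxx.
rewrite /OPT_A /Disp; congr sup; apply/seteqP; split => v /= [X [HP HX]].
- case: hm_att => t [Ht Hm].
  rewrite cardE in Hm.
  pose e := fun k : 'I_m => enum_val (cast_ord (esym Hm) k).
  have eP : forall k, present s d t (e k).
    by move=> k; have := enum_valP (cast_ord (esym Hm) k); rewrite inE.
  exists (fun k => X (e k)); split; first by move=> k; apply: HP.
  move=> k; have [h1 h2] := HX t Ht (e k) (eP k); split => // k' nk.
  apply: h2; last exact: eP.
  apply: contra nk => /eqP /enum_val_inj /cast_ord_inj ->; exact: eqxx.
- exists (fun i => X (c i)); split; first by move=> i; apply: HP.
  move=> t Ht i pi; have [h1 h2] := HX (c i); split => // j nji pj.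
  apply: h2; apply: (Hc' t i j _ pi pj); by rewrite eq_sym.
Qed.
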